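(* Let $M,N,K$ be symmetric homogeneous bi-variate means having symmetric asymptotic expansions with coefficients $(a^M_n)$, $(a^N_n)$, $(a^K_n)$ respectively. Then the resultant mean-map $R=\mathcal R(K,N,M)$, $R(s,t)=K\big(N(s,M(s,t)),N(M(s,t),t)\big)$, has a symmetric asymptotic expansion $R(x-t,x+t)\sim\sum_{m\ge0}a^R_mt^{2m}x^{-2m+1}$ ($x\to\infty$) with $$a^R_m=\sum_{n=0}^m a^K_n\sum_{k=0}^{m-n}P[k,2n,\mathbf d]\,P[m-n-k,-2n+1,\mathbf s],\qquad m\in\mathbb N_0,$$ where $\mathbf d=(d_m)_{m\ge0}$ and $\mathbf s=(s_m)_{m\ge0}$ are $$d_m=-\frac12\sum_{n=0}^m a^N_n\sum_{k=0}^{2m+1-2n}P[k,2n,\mathbf g^M]\,P[2m+1-2n-k,-2n+1,\mathbf h^M],$$ $$s_m=\frac12\sum_{n=0}^m a^N_n\sum_{k=0}^{2m-2n}P[k,2n,\mathbf g^M]\,P[2m-2n-k,-2n+1,\mathbf h^M].$$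
   Context: A bi-variate mean is a function $M:(0,\infty)^2\to(0,\infty)$ with $\min(s,t)\le M(s,t)\le\max(s,t)$; it is symmetric if $M(s,t)=M(t,s)$ and homogeneous if $M(\lambda s,\lambda t)=\lambda M(s,t)$ for $\lambda,s,t>0$. A mean $M$ has a symmetric asymptotic expansion with coefficients $(a^M_n)_{n\ge0}$ if for every fixed real $t$ and every $N\ge0$, $M(x-t,x+t)=\sum_{n=0}^N a^M_nt^{2n}x^{-2n+1}+o(x^{-2N+1})$ as $x\to\infty$. For a sequence $\mathbf b=(b_0,b_1,\ldots)$ with $b_0\ne0$ and $r\in\mathbb R$, $P[0,r,\mathbf b]=b_0^r$ and $P[n,r,\mathbf b]=\frac1{nb_0}\sum_{k=1}^n(k(1+r)-n)b_kP[n-k,r,\mathbf b]$ for $n\ge1$ (the coefficient of $z^n$ in $(\sum_j b_jz^j)^r$). Given coefficients $(a^M_n)$, set $\mathbf g^M=(1,a^M_1,0,a^M_2,0,a^M_3,\ldots)$ (i.e. $g_0=1$, $g_{2k-1}=a^M_k$, $g_{2k}=0$ for $k\ge1$) and $\mathbf h^M=(2,-1,a^M_1,0,a^M_2,0,a^M_3,\ldots)$ (i.e. $h_0=2$, $h_1=-1$, $h_{2k}=a^M_k$, $h_{2k+1}=0$ for $k\ge1$). (One has $d_0=1/2$, $s_0=1$.) *)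

(* Defs.v *)
From Stdlib Require Import Reals Lra List Arith.
Open Scope R_scope.

(* A bi-variate mean on (0,oo)^2, represented as a total function R -> R -> R
   whose values matter only on positive arguments. *)
Definition is_mean (M : R -> R -> R) : Prop :=
  forall s t, 0 < s -> 0 < t ->
    0 < M s t /\ Rmin s t <= M s t /\ M s t <= Rmax s t.

Definition is_symmetric (M : R -> R -> R) : Prop :=
  forall s t, 0 < s -> 0 < t -> M s t = M t s.

Definition is_homogeneous (M : R -> R -> R) : Prop :=
  forall l s t, 0 < l -> 0 < s -> 0 < t -> M (l * s) (l * t) = l * M s t.

Definition has_sym_asymp (M : R -> R -> R) (a : nat -> R) : Prop :=
  forall (t : R) (N : nat) (eps : R), 0 < eps ->
    exists X : R, forall x : R, X < x ->
      Rabs (M (x - t) (x + t)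
            - sum_f_R0 (fun n => a n * t ^ (2 * n) * powerRZ x (1 - 2 * Z.of_nat n)%Z) N)
      <= eps * Rabs (powerRZ x (1 - 2 * Z.of_nat N)%Z).

(* P[n,r,b] : table of P[0..n] computed by the recursion
   P[0] = b_0^r, P[n] = 1/(n b_0) sum_{k=1}^n (k(1+r)-n) b_k P[n-k].
   b_0^r is Rpower (b_0 > 0 in all uses: 1, 2, 1/2, 1). *)
Fixpoint Ptab (r : R) (b : nat -> R) (n : nat) : list R :=
  match n with
  | O => (Rpower (b O) r) :: nil
  | S n' =>
      let tab := Ptab r b n' in
      tab ++ ((/ (INR (S n') * b O)) *
              sum_f_R0 (fun j => (INR (S j) * (1 + r) - INR (S n')) * b (S j)
                                  * nth (S n' - S j) tab 0) n') :: nil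
  end.

Definition P (n : nat) (r : R) (b : nat -> R) : R := nth n (Ptab r b n) 0.

(* g^M = (1, a_1, 0, a_2, 0, a_3, ...) *)
Definition gseq (a : nat -> R) (j : nat) : R :=
  match j with
  | O => 1
  | _ => if Nat.odd j then a (Nat.div2 (S j)) else 0
  end.

(* h^M = (2, -1, a_1, 0, a_2, 0, a_3, ...) *)
Definition hseq (a : nat -> R) (j : nat) : R :=
  match j with
  | O => 2
  | S O => -1
  | _ => if Nat.even j then a (Nat.div2 j) else 0
  end.

Definition dseq (aM aN : nat -> R) (m : nat) : R :=
  - / 2 * sum_f_R0 (fun n => aN n *
      sum_f_R0 (fun k => P k (2 * INR n) (gseq aM)
                       * P (2 * m + 1 - 2 * n - k) (- 2 * INR n + 1) (hseq aM))
               (2 * m + 1 - 2 * n)) m.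

Definition sseq (aM aN : nat -> R) (m : nat) : R :=
  / 2 * sum_f_R0 (fun n => aN n *
      sum_f_R0 (fun k => P k (2 * INR n) (gseq aM)
                       * P (2 * m - 2 * n - k) (- 2 * INR n + 1) (hseq aM))
               (2 * m - 2 * n)) m.

Definition resultant (K N M : R -> R -> R) (s t : R) : R :=
  K (N s (M s t)) (N (M s t) t).

(* Main.v *)
Require Import Defs.
From Stdlib Require Import Reals Lra Lia List Arith ZArith FunctionalExtensionality.
Open Scope R_scope.


Definition conv (a b : nat -> R) (n : nat) : R :=
  sum_f_R0 (fun k => a k * b (n - k)%nat) n.
Definition Dop (a : nat -> R) (n : nat) : R := INR n * a n.
Definition delta (n : nat) : R := match n with O => 1 | _ => 0 end.
Definition shiftn (k : nat) (a : nat -> R) (j : nat) : R :=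
  if Nat.leb k j then a (j - k)%nat else 0.
Definition spread (a : nat -> R) (j : nat) : R :=
  if Nat.even j then a (Nat.div2 j) else 0.
Fixpoint powN (b : nat -> R) (k : nat) : nat -> R :=
  match k with O => delta | S k => conv b (powN b k) end.
Definition Pf (r : R) (b : nat -> R) : nat -> R := fun k => P k r b.
Definition MillerC (r : R) (b q : nat -> R) : Prop :=
  q O = Rpower (b O) r /\
  forall n, sum_f_R0 (fun k => (INR k * (1 + r) - INR n) * b k * q (n - k)%nat) n = 0.

Lemma sum_scal_l (f : nat -> R) (c : R) N :
  sum_f_R0 (fun i => c * f i) N = c * sum_f_R0 f N.
Proof. induction N; simpl; [ring| rewrite IHN; ring]. Qed.

Lemma sum_ext (f g : nat -> R) N : (forall i, (i <= N)%nat -> f i = g i) ->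
  sum_f_R0 f N = sum_f_R0 g N.
Proof. apply sum_eq. Qed.

Lemma Ptab_len r b n : length (Ptab r b n) = S n.
Proof. induction n; simpl; auto. rewrite length_app; simpl; lia. Qed.

Lemma Ptab_nth r b n k : (k <= n)%nat -> nth k (Ptab r b n) 0 = P k r b.
Proof.
  intros H; induction n.
  - assert (k = 0%nat) by lia; subst; reflexivity.
  - destruct (Nat.eq_dec k (S n)) as [->|Hk]; [reflexivity|].
    simpl Ptab. rewrite app_nth1 by (rewrite Ptab_len; lia). apply IHn; lia.
Qed.

Lemma P_rec r b n : P (S n) r b =
  / (INR (S n) * b O) * sum_f_R0 (fun j => (INR (S j) * (1 + r) - INR (S n)) * b (S j)
       * P (n - j)%nat r b) n.
Proof.
  unfold P at 1. simpl Ptab.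
  rewrite app_nth2 by (rewrite Ptab_len; lia). rewrite Ptab_len, Nat.sub_diag. simpl nth.
  f_equal. apply sum_ext; intros i Hi. f_equal.
  replace (S n - S i)%nat with (n - i)%nat by lia. apply Ptab_nth; lia.
Qed.

Lemma P_Miller r b : b O <> 0 -> MillerC r b (Pf r b).
Proof.
  intros Hb; split; [reflexivity|]. intros n; destruct n.
  - simpl; ring.
  - rewrite decomp_sum by lia. simpl pred.
    unfold Pf. rewrite Nat.sub_0_r, P_rec.
    replace (INR 0) with 0 by reflexivity.
    assert (HS : INR (S n) <> 0) by (apply not_0_INR; lia).
    match goal with |- _ + ?A = 0 => replace A with
      (sum_f_R0 (fun j => (INR (S j) * (1 + r) - INR (S n)) * b (S j) * P (n - j) r b) n)
      by (apply sum_ext; intros; reflexivity) end.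
    field. split; auto.
Qed.

Lemma Miller_unique r b q : b O <> 0 -> MillerC r b q -> forall n, q n = P n r b.
Proof.
  intros Hb [H0 Hs].
  assert (forall n k, (k <= n)%nat -> q k = P k r b).
  { induction n; intros k Hk.
    - assert (k = 0%nat) by lia; subst; exact H0.
    - destruct (Nat.eq_dec k (S n)) as [->|]; [|apply IHn; lia].
      specialize (Hs (S n)). rewrite decomp_sum in Hs by lia. simpl pred in Hs.
      rewrite Nat.sub_0_r in Hs.
      rewrite P_rec.
      assert (HS : INR (S n) <> 0) by (apply not_0_INR; lia).
      replace (sum_f_R0 (fun j => (INR (S j) * (1 + r) - INR (S n)) * b (S j) * P (n - j)%nat r b) n)
        with (sum_f_R0 (fun i => (INR (S i) * (1 + r) - INR (S n)) * b (S i) * q (S n - S i)%nat) n).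
      2:{ apply sum_ext; intros i Hi. simpl (S n - S i)%nat. rewrite (IHn (n - i)%nat) by lia. reflexivity. }
      replace (INR 0) with 0 in Hs by reflexivity.
      apply (Rmult_eq_reg_l (INR (S n) * b O)); [|apply Rmult_integral_contrapositive; auto].
      field_simplify; [|auto]. lra. }
  intros n; apply (H n); lia.
Qed.


Definition near0 (Pp : R -> Prop) := exists d, 0 < d /\ forall z, Rabs z < d -> Pp z.
Definition bigO (f : R -> R) (N : nat) :=
  exists C, near0 (fun z => Rabs (f z) <= C * Rabs z ^ N).
Definition poly (c : nat -> R) (N : nat) (z : R) := sum_f_R0 (fun k => c k * z ^ k) N.
Definition asy (f : R -> R) (c : nat -> R) := forall N, bigO (fun z => f z - poly c N z) (S N).
Definition trunc (c : nat -> R) (N : nat) (k : nat) : R := if Nat.leb k N then c k else 0.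

Lemma near0_and (P Q : R -> Prop) : near0 P -> near0 Q -> near0 (fun z => P z /\ Q z).
Proof.
  intros [d1 [H1 P1]] [d2 [H2 P2]]. exists (Rmin d1 d2); split.
  - apply Rmin_pos; auto.
  - intros z Hz; split; [apply P1|apply P2]; eapply Rlt_le_trans; eauto;
      [apply Rmin_l|apply Rmin_r].
Qed.

Lemma near0_mono (P Q : R -> Prop) : near0 P -> (forall z, P z -> Q z) -> near0 Q.
Proof. intros [d [Hd H]] HPQ; exists d; split; auto. Qed.

Lemma near0_lt d : 0 < d -> near0 (fun z => Rabs z < d).
Proof. intros Hd; exists d; split; auto. Qed.

Lemma pow_le_decr x m n : 0 <= x <= 1 -> (m <= n)%nat -> x ^ n <= x ^ m.
Proof.
  intros Hx Hmn. replace n with (m + (n - m))%nat by lia. rewrite pow_add.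
  rewrite <- (Rmult_1_r (x ^ m)) at 2. apply Rmult_le_compat_l.
  - apply pow_le; lra.
  - rewrite <- (pow1 (n - m)). apply pow_incr; lra.
Qed.

Lemma bigO_ext f g N : near0 (fun z => f z = g z) -> bigO f N -> bigO g N.
Proof.
  intros He [C HC]; exists C. eapply near0_mono; [apply near0_and; [exact He|exact HC]|].
  simpl; intros z [E B]; rewrite <- E; auto.
Qed.

Lemma bigO_plus f g N : bigO f N -> bigO g N -> bigO (fun z => f z + g z) N.
Proof.
  intros [C1 H1] [C2 H2]; exists (C1 + C2).
  eapply near0_mono; [apply near0_and; [exact H1|exact H2]|].
  simpl; intros z [A B]. eapply Rle_trans; [apply Rabs_triang|]. lra.
Qed.

Lemma bigO_minus f g N : bigO f N -> bigO g N -> bigO (fun z => f z - g z) N.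
Proof.
  intros [C1 H1] [C2 H2]; exists (C1 + C2).
  eapply near0_mono; [apply near0_and; [exact H1|exact H2]|].
  simpl; intros z [A B]. eapply Rle_trans; [apply Rabs_triang|]. rewrite Rabs_Ropp. lra.
Qed.

Lemma bigO_abs f N : bigO f N -> exists C, 0 <= C /\ near0 (fun z => Rabs (f z) <= C * Rabs z ^ N).
Proof.
  intros [C H]; exists (Rabs C); split; [apply Rabs_pos|].
  eapply near0_mono; [exact H|]. simpl; intros z Hz. eapply Rle_trans; [exact Hz|].
  apply Rmult_le_compat_r; [apply pow_le, Rabs_pos| apply RRle_abs].
Qed.

Lemma bigO_mul_bound f g N B : bigO f N -> near0 (fun z => Rabs (g z) <= B) ->
  bigO (fun z => g z * f z) N.
Proof.
  intros Hf Hg. destruct (bigO_abs f N Hf) as [C [HC H]].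
  exists (Rabs B * C). eapply near0_mono; [apply near0_and; [exact H|exact Hg]|].
  simpl; intros z [A Bz]. rewrite Rabs_mult. rewrite Rmult_assoc.
  apply Rmult_le_compat; try apply Rabs_pos; auto.
  eapply Rle_trans; [exact Bz|apply RRle_abs].
Qed.

Lemma bigO_scal f N c : bigO f N -> bigO (fun z => c * f z) N.
Proof.
  intros H; apply (bigO_mul_bound f (fun _ => c) N (Rabs c)); auto.
  exists 1; split; [lra|]; intros; lra.
Qed.

Lemma bigO_weak f N M : bigO f N -> (M <= N)%nat -> bigO f M.
Proof.
  intros Hf HMN. destruct (bigO_abs f N Hf) as [C [HC H]]. exists C.
  eapply near0_mono; [apply near0_and; [exact H|apply (near0_lt 1); lra]|].
  simpl; intros z [A B]. eapply Rle_trans; [exact A|].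
  apply Rmult_le_compat_l; auto. apply pow_le_decr; auto. split; [apply Rabs_pos|lra].
Qed.

Lemma bigO_mul f g N M : bigO f N -> bigO g M -> bigO (fun z => f z * g z) (N + M).
Proof.
  intros Hf Hg. destruct (bigO_abs f N Hf) as [C1 [HC1 H1]].
  destruct (bigO_abs g M Hg) as [C2 [HC2 H2]]. exists (C1 * C2).
  eapply near0_mono; [apply near0_and; [exact H1|exact H2]|].
  simpl; intros z [A B]. rewrite Rabs_mult, pow_add.
  replace (C1 * C2 * (Rabs z ^ N * Rabs z ^ M)) with ((C1 * Rabs z ^ N) * (C2 * Rabs z ^ M)) by ring.
  apply Rmult_le_compat; try apply Rabs_pos; auto.
Qed.

Lemma bigO_pow c M N : (N <= M)%nat -> bigO (fun z => c * z ^ M) N.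
Proof.
  intros H. exists (Rabs c). eapply near0_mono; [apply (near0_lt 1); lra|].
  simpl; intros z Hz. rewrite Rabs_mult, <- RPow_abs.
  apply Rmult_le_compat_l; [apply Rabs_pos|]. apply pow_le_decr; auto.
  split; [apply Rabs_pos|lra].
Qed.

Lemma bigO_zero N : bigO (fun _ => 0) N.
Proof.
  exists 0. exists 1; split; [lra|]. intros; rewrite Rabs_R0; lra.
Qed.

Lemma poly_tail c N M : (N <= M)%nat -> bigO (fun z => poly c M z - poly c N z) (S N).
Proof.
  intros H; induction M.
  - assert (N = 0%nat) by lia; subst. eapply bigO_ext; [|apply bigO_zero].
    exists 1; split; [lra|]; intros; ring.
  - destruct (Nat.eq_dec N (S M)) as [->|HN].
    + eapply bigO_ext; [|apply bigO_zero]. exists 1; split; [lra|]; intros; ring.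
    + eapply bigO_ext; [|apply bigO_plus; [apply IHM; lia|apply (bigO_pow (c (S M)) (S M)); lia]].
      exists 1; split; [lra|]; intros; unfold poly; simpl; ring.
Qed.

Lemma asy_weak f c : (forall N, exists M, (N <= M)%nat /\ bigO (fun z => f z - poly c M z) (S N)) ->
  asy f c.
Proof.
  intros H N. destruct (H N) as [M [HM B]].
  eapply bigO_ext; [|apply bigO_plus; [exact B|apply (poly_tail c N M HM)]].
  exists 1; split; [lra|]; intros; ring.
Qed.

Lemma asy_ext f g c : near0 (fun z => f z = g z) -> asy f c -> asy g c.
Proof.
  intros He H N. eapply bigO_ext; [|apply (H N)]. eapply near0_mono; [exact He|].
  simpl; intros z ->; reflexivity.
Qed.

Lemma asy_ext_all f g c : (forall z, f z = g z) -> asy f c -> asy g c.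
Proof. intros He; apply asy_ext. exists 1; split; [lra|]; auto. Qed.

Lemma poly_ext c c' N z : (forall k, (k <= N)%nat -> c k = c' k) -> poly c N z = poly c' N z.
Proof. intros H; apply sum_ext; intros; rewrite H; auto. Qed.

Lemma asy_seq_ext f c c' : (forall k, c k = c' k) -> asy f c -> asy f c'.
Proof.
  intros He H N. eapply bigO_ext; [|apply (H N)]. exists 1; split; [lra|].
  intros; rewrite (poly_ext c c'); auto.
Qed.

Lemma asy_plus f g a b : asy f a -> asy g b -> asy (fun z => f z + g z) (fun k => a k + b k).
Proof.
  intros Hf Hg N. eapply bigO_ext; [|apply bigO_plus; [apply (Hf N)|apply (Hg N)]].
  exists 1; split; [lra|]; intros; unfold poly.
  rewrite (sum_ext (fun i => (a i + b i) * z ^ i) (fun i => a i * z ^ i + b i * z ^ i)) by (intros; ring).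
  rewrite plus_sum. ring.
Qed.

Lemma asy_scal f a c : asy f a -> asy (fun z => c * f z) (fun k => c * a k).
Proof.
  intros Hf N. eapply bigO_ext; [|apply (bigO_scal (fun z => f z - poly a N z) _ c); apply (Hf N)].
  exists 1; split; [lra|]; intros; unfold poly.
  rewrite (sum_ext (fun i => c * a i * z ^ i) (fun i => c * (a i * z ^ i))) by (intros; ring).
  rewrite sum_scal_l. ring.
Qed.

Lemma asy_minus f g a b : asy f a -> asy g b -> asy (fun z => f z - g z) (fun k => a k - b k).
Proof.
  intros Hf Hg. apply (asy_scal g b (-1)) in Hg.
  eapply asy_seq_ext; [|eapply asy_ext_all; [|apply (asy_plus _ _ _ _ Hf Hg)]];
    simpl; intros; ring.
Qed.

Lemma poly_trunc_le c N M z : (M <= N)%nat -> poly (trunc c N) M z = poly c M z.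
Proof.
  intros H; apply poly_ext; intros k Hk; unfold trunc.
  replace (Nat.leb k N) with true by (symmetry; apply Nat.leb_le; lia); auto.
Qed.

Lemma poly_trunc_ge c N M z : (N <= M)%nat -> poly (trunc c N) M z = poly c N z.
Proof.
  intros H; induction M.
  - assert (N = 0%nat) by lia; subst; apply poly_trunc_le; lia.
  - destruct (Nat.eq_dec N (S M)) as [->|HN]; [apply poly_trunc_le; lia|].
    unfold poly in *; simpl. rewrite IHM by lia. unfold trunc.
    replace (Nat.leb (S M) N) with false by (symmetry; apply Nat.leb_gt; lia). ring.
Qed.

Lemma asy_poly c N : asy (poly c N) (trunc c N).
Proof.
  intros M. destruct (le_lt_dec N M).
  - eapply bigO_ext; [|apply bigO_zero]. exists 1; split; [lra|]; intros.
    rewrite poly_trunc_ge by auto; ring.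
  - eapply bigO_ext; [|apply (poly_tail c M N); lia]. exists 1; split; [lra|]; intros.
    rewrite poly_trunc_le by lia; ring.
Qed.

Lemma asy_bounded f c : asy f c -> exists B, near0 (fun z => Rabs (f z) <= B).
Proof.
  intros H. destruct (bigO_abs _ _ (H 0%nat)) as [C [HC Hn]].
  exists (Rabs (c 0%nat) + C).
  eapply near0_mono; [apply near0_and; [exact Hn|apply (near0_lt 1); lra]|].
  simpl; intros z [A B]. unfold poly in A; simpl in A.
  replace (f z) with ((f z - c 0%nat * 1) + c 0%nat) by ring.
  eapply Rle_trans; [apply Rabs_triang|].
  assert (C * (Rabs z * 1) <= C) by (rewrite Rmult_1_r; rewrite <- (Rmult_1_r C) at 2;
    apply Rmult_le_compat_l; lra). lra.
Qed.

Lemma asy_near f c eps : asy f c -> 0 < eps -> near0 (fun z => Rabs (f z - c 0%nat) < eps).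
Proof.
  intros H He. destruct (bigO_abs _ _ (H 0%nat)) as [C [HC Hn]].
  eapply near0_mono; [apply near0_and; [exact Hn|apply (near0_lt (Rmin 1 (eps / (C + 1)))); apply Rmin_pos; [lra|apply Rdiv_lt_0_compat; lra]]|].
  simpl; intros z [A B]. unfold poly in A; simpl in A. rewrite Rmult_1_r, Rmult_1_r in A.
  eapply Rle_lt_trans; [exact A|].
  assert (Rabs z < eps / (C + 1)) by (eapply Rlt_le_trans; [exact B|apply Rmin_r]).
  apply (Rmult_lt_compat_l (C+1)) in H0; [|lra].
  replace ((C + 1) * (eps / (C + 1))) with eps in H0 by (field; lra).
  pose proof (Rabs_pos z). nra.
Qed.

Lemma asy_agree f g c c' N : asy f c -> asy g c' -> (forall k, (k <= N)%nat -> c k = c' k) ->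
  bigO (fun z => f z - g z) (S N).
Proof.
  intros Hf Hg He. eapply bigO_ext; [|apply bigO_minus; [apply (Hf N)|apply (Hg N)]].
  exists 1; split; [lra|]; intros. rewrite (poly_ext c c' N) by auto. ring.
Qed.


Lemma sum_scal_r (f : nat -> R) (c : R) N :
  sum_f_R0 (fun i => f i * c) N = sum_f_R0 f N * c.
Proof. induction N; simpl; [ring| rewrite IHN; ring]. Qed.

Lemma poly_prod (a b : nat -> R) (N : nat) : (0 < N)%nat ->
  bigO (fun z => poly a N z * poly b N z - poly (conv a b) N z) (S N).
Proof.
  intros HN.
  set (K := sum_f_R0 (fun k => sum_f_R0 (fun l => Rabs (a (S (l + k)%nat)) * Rabs (b (N - l)%nat))
              (pred (N - k))) (pred N)).
  exists K. exists 1; split; [lra|]. intros z Hz.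
  unfold poly. rewrite cauchy_finite by auto.
  replace (sum_f_R0 (fun k => sum_f_R0 (fun p => a p * z ^ p * (b (k - p)%nat * z ^ (k - p))) k) N)
    with (sum_f_R0 (fun k => conv a b k * z ^ k) N).
  2:{ apply sum_ext; intros k Hk. unfold conv. rewrite <- sum_scal_r. apply sum_ext; intros p Hp.
      replace (z ^ k) with (z ^ p * z ^ (k - p)) by (rewrite <- pow_add; f_equal; lia). ring. }
  match goal with |- Rabs (?A + ?B - ?A) <= _ => replace (A + B - A) with B by ring end.
  eapply Rle_trans; [apply Rsum_abs|].
  unfold K. rewrite <- sum_scal_r. apply sum_Rle; intros k Hk.
  eapply Rle_trans; [apply Rsum_abs|].
  rewrite <- sum_scal_r. apply sum_Rle; intros l Hl.
  rewrite !Rabs_mult, <- !RPow_abs.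
  replace (Rabs (a (S (l + k)%nat)) * Rabs z ^ S (l + k)%nat * (Rabs (b (N - l)%nat) * Rabs z ^ (N - l)))
    with (Rabs (a (S (l + k)%nat)) * Rabs (b (N - l)%nat) * Rabs z ^ (S (l + k) + (N - l))%nat) by (rewrite pow_add; ring).
  apply Rmult_le_compat_l; [apply Rmult_le_pos; apply Rabs_pos|].
  apply pow_le_decr; [split; [apply Rabs_pos|lra]|lia].
Qed.

Lemma asy_mult_core f g a b N : (0 < N)%nat -> asy f a -> asy g b ->
  bigO (fun z => f z * g z - poly (conv a b) N z) (S N).
Proof.
  intros HN Hf Hg.
  destruct (asy_bounded _ _ (asy_poly a N)) as [B1 HB1].
  destruct (asy_bounded _ _ Hg) as [B2 HB2].
  eapply bigO_ext; [|apply bigO_plus; [apply bigO_plus; [apply (poly_prod a b N HN)|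
     apply (bigO_mul_bound _ (poly a N) _ B1 (Hg N) HB1)]|
     apply (bigO_mul_bound _ g _ B2 (Hf N) HB2)]].
  exists 1; split; [lra|]. intros; simpl; ring.
Qed.

Lemma asy_mult f g a b : asy f a -> asy g b -> asy (fun z => f z * g z) (conv a b).
Proof.
  intros Hf Hg. apply asy_weak; intros N. exists (S N); split; [lia|].
  apply (bigO_weak _ (S (S N))); [apply asy_mult_core; auto; lia|lia].
Qed.

Lemma asy_unique f c c' : asy f c -> asy f c' -> forall k, c k = c' k.
Proof.
  intros Hc Hc'.
  assert (forall n k, (k <= n)%nat -> c k = c' k); [|intros k; apply (H k); lia].
  induction n as [n IH] using lt_wf_ind. intros k Hk.
  assert (Hlow : forall i, (i < k)%nat -> c i = c' i) by (intros; apply (IH i); lia).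
  assert (Hp : forall z, poly c' k z - poly c k z = (c' k - c k) * z ^ k).
  { intros z. destruct k; [unfold poly; simpl; ring|].
    unfold poly; simpl. rewrite (sum_ext (fun k0 => c' k0 * z ^ k0) (fun k0 => c k0 * z ^ k0)).
    ring. intros i Hi; rewrite Hlow by lia; auto. }
  assert (HB : bigO (fun z => (c' k - c k) * z ^ k) (S k)).
  { eapply bigO_ext; [|apply bigO_minus; [apply (Hc k)|apply (Hc' k)]].
    exists 1; split; [lra|]; intros z _; simpl. rewrite <- Hp; ring. }
  destruct (bigO_abs _ _ HB) as [C [HC [d [Hd Hn]]]].
  destruct (Req_dec (c k) (c' k)) as [E|E]; auto. exfalso.
  set (D := Rabs (c' k - c k)). assert (HD : 0 < D) by (apply Rabs_pos_lt; intro; apply E; lra).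
  set (z := Rmin (d / 2) (D / (2 * (C + 1)))).
  assert (Hz : 0 < z) by (apply Rmin_pos; apply Rdiv_lt_0_compat; lra).
  assert (Hzd : Rabs z < d) by (rewrite Rabs_pos_eq by lra; eapply Rle_lt_trans; [apply Rmin_l|lra]).
  specialize (Hn z Hzd). rewrite Rabs_mult, <- RPow_abs in Hn.
  rewrite (Rabs_pos_eq z) in Hn by (left; exact Hz). fold D in Hn.
  assert (Hzk : 0 < z ^ k) by (apply pow_lt; exact Hz). simpl in Hn.
  assert (D <= C * z) by nra.
  assert (z <= D / (2 * (C + 1))) by apply Rmin_r.
  assert (C * z <= C * (D / (2 * (C + 1)))) by (apply Rmult_le_compat_l; lra).
  assert (C * (D / (2 * (C + 1))) < D).
  { apply (Rmult_lt_reg_r (2 * (C + 1))); [lra|].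
    replace (C * (D / (2 * (C + 1))) * (2 * (C + 1))) with (C * D) by (field; lra). nra. }
  lra.
Qed.

Lemma conv_local a b a' b' n : (forall i, (i <= n)%nat -> a i = a' i) ->
  (forall i, (i <= n)%nat -> b i = b' i) -> conv a b n = conv a' b' n.
Proof.
  intros Ha Hb. apply sum_ext; intros i Hi. rewrite Ha, Hb by lia; auto.
Qed.

Lemma trunc_eq c n i : (i <= n)%nat -> trunc c n i = c i.
Proof. intros H; unfold trunc. replace (Nat.leb i n) with true by (symmetry; apply Nat.leb_le; auto); auto. Qed.

Lemma conv_comm a b n : conv a b n = conv b a n.
Proof.
  assert (H1 := asy_mult _ _ _ _ (asy_poly a n) (asy_poly b n)).
  assert (H2 := asy_mult _ _ _ _ (asy_poly b n) (asy_poly a n)).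
  eapply asy_ext_all in H2; [|intros z; apply Rmult_comm].
  pose proof (asy_unique _ _ _ H1 H2 n) as E.
  rewrite (conv_local a b (trunc a n) (trunc b n)), (conv_local b a (trunc b n) (trunc a n));
    auto; intros; rewrite trunc_eq; auto.
Qed.

Lemma conv_assoc a b c n : conv (conv a b) c n = conv a (conv b c) n.
Proof.
  assert (H1 := asy_mult _ _ _ _ (asy_mult _ _ _ _ (asy_poly a n) (asy_poly b n)) (asy_poly c n)).
  assert (H2 := asy_mult _ _ _ _ (asy_poly a n) (asy_mult _ _ _ _ (asy_poly b n) (asy_poly c n))).
  eapply asy_ext_all in H2; [|intros z; symmetry; apply Rmult_assoc].
  pose proof (asy_unique _ _ _ H1 H2 n) as E.
  rewrite (conv_local (conv a b) c (conv (trunc a n) (trunc b n)) (trunc c n)).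
  rewrite (conv_local a (conv b c) (trunc a n) (conv (trunc b n) (trunc c n))); auto.
  all: intros; try (rewrite trunc_eq; auto; fail).
  all: apply conv_local; intros; rewrite trunc_eq; auto; lia.
Qed.

Lemma conv_plus_r a b c n : conv a (fun k => b k + c k) n = conv a b n + conv a c n.
Proof. unfold conv. rewrite <- plus_sum. apply sum_ext; intros; ring. Qed.

Lemma conv_plus_l a b c n : conv (fun k => a k + b k) c n = conv a c n + conv b c n.
Proof. unfold conv. rewrite <- plus_sum. apply sum_ext; intros; ring. Qed.

Lemma conv_scal_l a b c n : conv (fun k => c * a k) b n = c * conv a b n.
Proof. unfold conv. rewrite <- sum_scal_l. apply sum_ext; intros; ring. Qed.

Lemma conv_scal_r a b c n : conv a (fun k => c * b k) n = c * conv a b n.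
Proof. unfold conv. rewrite <- sum_scal_l. apply sum_ext; intros; ring. Qed.

Lemma Dop_conv a b n : Dop (conv a b) n = conv (Dop a) b n + conv a (Dop b) n.
Proof.
  unfold Dop, conv. rewrite <- plus_sum, <- sum_scal_l. apply sum_ext; intros i Hi.
  rewrite minus_INR by auto. ring.
Qed.

Lemma Miller_conv r b q n :
  sum_f_R0 (fun k => (INR k * (1 + r) - INR n) * b k * q (n - k)%nat) n =
  r * conv (Dop b) q n - conv b (Dop q) n.
Proof.
  unfold conv, Dop. rewrite <- sum_scal_l, <- minus_sum. apply sum_ext; intros i Hi.
  rewrite minus_INR by auto. ring.
Qed.

Lemma P_succ b r : 0 < b O -> forall n, P n (r + 1) b = conv (Pf r b) b n.
Proof.
  intros Hb n. symmetry. apply (Miller_unique (r + 1) b); [lra|]. split.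
  - unfold conv, Pf; simpl. unfold P; simpl. rewrite Rpower_plus, Rpower_1; auto.
  - intros m. rewrite Miller_conv.
    set (p := Pf r b).
    assert (HM : forall k, conv b (Dop p) k = r * conv (Dop b) p k).
    { intros k. pose proof (proj2 (P_Miller r b ltac:(lra)) k) as H.
      rewrite Miller_conv in H. fold p in H. lra. }
    replace (Dop (conv p b)) with (fun k => conv (Dop p) b k + conv p (Dop b) k)
      by (extensionality k; symmetry; apply Dop_conv).
    rewrite conv_plus_r.
    rewrite <- (conv_assoc b (Dop p) b).
    replace (conv b (Dop p)) with (fun k => r * conv (Dop b) p k) by (extensionality k; auto).
    rewrite conv_scal_l.
    rewrite <- (conv_assoc b p (Dop b)).
    replace (conv b p) with (conv p b) by (extensionality k; apply conv_comm).
    rewrite (conv_comm (conv p b) (Dop b)). rewrite <- (conv_assoc (Dop b) p b). ring.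
Qed.


Lemma P_zero b : 0 < b O -> forall n, P n 0 b = delta n.
Proof.
  intros Hb n. symmetry. apply (Miller_unique 0 b delta); [lra|]. split.
  - simpl. rewrite Rpower_O; auto.
  - intros m. apply sum_eq_R0; intros k Hk.
    destruct (Nat.eq_dec k m) as [->|Hne]; [ring|].
    destruct (m - k)%nat eqn:E; [lia|]. simpl; ring.
Qed.

Lemma powN_P b : 0 < b O -> forall k n, powN b k n = P n (INR k) b.
Proof.
  intros Hb k. induction k; intros n.
  - simpl. rewrite P_zero; auto.
  - simpl powN. rewrite conv_comm. rewrite S_INR, P_succ by auto.
    apply conv_local; intros; auto.
Qed.

Lemma P_scal c b r : 0 < c -> 0 < b O -> forall n,
  P n r (fun k => c * b k) = Rpower c r * P n r b.
Proof.
  intros Hc Hb n. symmetry.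
  apply (Miller_unique r (fun k => c * b k) (fun n => Rpower c r * P n r b)).
  { apply Rmult_integral_contrapositive; lra. }
  split.
  - unfold P; simpl. apply Rpower_mult_distr; auto.
  - intros m. pose proof (proj2 (P_Miller r b ltac:(lra)) m) as H. unfold Pf in H.
    rewrite (sum_ext _ (fun k => (c * Rpower c r) * ((INR k * (1 + r) - INR m) * b k * P (m - k)%nat r b)))
      by (intros; ring).
    rewrite sum_scal_l, H. ring.
Qed.

Lemma even_double m : Nat.even (2 * m) = true.
Proof. induction m; auto. replace (2 * S m)%nat with (S (S (2 * m))) by lia. exact IHm. Qed.

Lemma even_double1 m : Nat.even (2 * m + 1) = false.
Proof. induction m; auto. replace (2 * S m + 1)%nat with (S (S (2 * m + 1))) by lia. exact IHm. Qed.

Lemma spread_even a m : spread a (2 * m) = a m.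
Proof. unfold spread. rewrite even_double, Nat.div2_double. auto. Qed.

Lemma spread_odd a m : spread a (2 * m + 1) = 0.
Proof. unfold spread. rewrite even_double1. auto. Qed.

Lemma parity j : exists m, j = (2 * m)%nat \/ j = (2 * m + 1)%nat.
Proof. destruct (Nat.Even_or_Odd j) as [[m H]|[m H]]; exists m; auto. Qed.

Lemma sum_even_part1 F m : (forall i, F (2 * i + 1)%nat = 0) ->
  sum_f_R0 F (2 * m + 1) = sum_f_R0 (fun i => F (2 * i)%nat) m.
Proof.
  intros H. induction m.
  - pose proof (H 0%nat) as H0; simpl in H0; simpl. rewrite H0. ring.
  - replace (2 * S m + 1)%nat with (S (S (2 * m + 1))) by lia.
    cbn [sum_f_R0]. rewrite IHm.
    replace (S (S (2 * m + 1))) with (2 * S m + 1)%nat by lia. rewrite H.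
    replace (S (2 * m + 1)) with (2 * S m)%nat by lia. ring.
Qed.

Lemma sum_even_part0 F m : (forall i, F (2 * i + 1)%nat = 0) ->
  sum_f_R0 F (2 * m) = sum_f_R0 (fun i => F (2 * i)%nat) m.
Proof.
  intros H. destruct m; [reflexivity|].
  replace (2 * S m)%nat with (S (2 * m + 1)) by lia. cbn [sum_f_R0].
  rewrite sum_even_part1 by auto. replace (S (2 * m + 1)) with (2 * S m)%nat by lia. reflexivity.
Qed.

Lemma P_spread b r : 0 < b O -> forall n, P n r (spread b) = spread (Pf r b) n.
Proof.
  intros Hb n. symmetry. apply (Miller_unique r (spread b) (spread (Pf r b))).
  { unfold spread; simpl; lra. }
  split; [reflexivity|].
  intros j. destruct (parity j) as [m [->| ->]].
  - rewrite sum_even_part0 by (intros i; rewrite spread_odd; ring).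
    rewrite (sum_ext _ (fun i => 2 * ((INR i * (1 + r) - INR m) * b i * Pf r b (m - i)%nat))).
    + rewrite sum_scal_l. pose proof (proj2 (P_Miller r b ltac:(lra)) m) as H. rewrite H. ring.
    + intros i Hi. rewrite !spread_even. replace (2 * m - 2 * i)%nat with (2 * (m - i))%nat by lia.
      rewrite spread_even, !mult_INR. simpl (INR 2). ring.
  - rewrite sum_even_part1 by (intros i; rewrite spread_odd; ring).
    apply sum_eq_R0; intros i Hi.
    replace (2 * m + 1 - 2 * i)%nat with (2 * (m - i) + 1)%nat by lia. rewrite spread_odd. ring.
Qed.

Lemma conv_spread a b n : conv (spread a) (spread b) n = spread (conv a b) n.
Proof.
  destruct (parity n) as [m [->| ->]]; unfold conv.
  - rewrite sum_even_part0 by (intros i; rewrite spread_odd; ring).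
    rewrite spread_even. apply sum_ext; intros i Hi.
    replace (2 * m - 2 * i)%nat with (2 * (m - i))%nat by lia. rewrite !spread_even. auto.
  - rewrite sum_even_part1 by (intros i; rewrite spread_odd; ring).
    rewrite spread_odd. apply sum_eq_R0; intros i Hi.
    replace (2 * m + 1 - 2 * i)%nat with (2 * (m - i) + 1)%nat by lia. rewrite spread_odd. ring.
Qed.

Lemma powN_spread d k : powN (spread d) k = spread (powN d k).
Proof.
  induction k; extensionality n.
  - simpl. destruct (parity n) as [m [->| ->]].
    + rewrite spread_even. destruct m; reflexivity.
    + rewrite spread_odd. rewrite Nat.add_1_r. reflexivity.
  - simpl. rewrite IHk. apply conv_spread.
Qed.

Lemma shiftn0 a : shiftn 0 a = a.
Proof. extensionality j. unfold shiftn; simpl. rewrite Nat.sub_0_r; auto. Qed.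

Lemma shiftnS k a : shiftn (S k) a = shiftn 1 (shiftn k a).
Proof. extensionality j. unfold shiftn. destruct j; simpl; auto. rewrite Nat.sub_0_r; auto. Qed.

Lemma shiftn_low k a j : (j < k)%nat -> shiftn k a j = 0.
Proof. intros H; unfold shiftn. replace (Nat.leb k j) with false by (symmetry; apply Nat.leb_gt; auto). auto. Qed.

Lemma shiftn_high k a j : (k <= j)%nat -> shiftn k a j = a (j - k)%nat.
Proof. intros H; unfold shiftn. replace (Nat.leb k j) with true by (symmetry; apply Nat.leb_le; auto). auto. Qed.

Lemma conv_shift1 a b : conv (shiftn 1 a) b = shiftn 1 (conv a b).
Proof.
  extensionality j. destruct j.
  - unfold conv, shiftn; simpl; ring.
  - unfold conv. rewrite decomp_sum by lia. simpl pred.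
    rewrite (shiftn_low 1 a 0) by lia. rewrite (shiftn_high 1 _ (S j)) by lia.
    replace (S j - 1)%nat with j by lia. rewrite Rmult_0_l, Rplus_0_l.
    apply sum_ext; intros i Hi. rewrite shiftn_high by lia. f_equal; f_equal; lia.
Qed.

Lemma conv_shiftn_l k a b : conv (shiftn k a) b = shiftn k (conv a b).
Proof.
  induction k.
  - rewrite !shiftn0; auto.
  - rewrite (shiftnS k a), (shiftnS k (conv a b)), conv_shift1, IHk; auto.
Qed.

Lemma conv_shiftn_r k a b : conv a (shiftn k b) = shiftn k (conv a b).
Proof.
  extensionality j. rewrite conv_comm, conv_shiftn_l. unfold shiftn.
  destruct (Nat.leb k j); auto. apply conv_comm.
Qed.

Lemma shiftn_add k m a j : shiftn k (shiftn m a) j = shiftn (k + m) a j.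
Proof.
  destruct (le_lt_dec (k + m) j).
  - rewrite !shiftn_high by lia. f_equal; lia.
  - rewrite (shiftn_low (k + m)) by lia. destruct (le_lt_dec k j).
    + rewrite shiftn_high, shiftn_low by lia. auto.
    + rewrite shiftn_low by lia. auto.
Qed.

Lemma powN_shift c b k : powN (fun j => c * shiftn 1 b j) k = fun j => c ^ k * shiftn k (powN b k) j.
Proof.
  induction k; extensionality j.
  - simpl. rewrite shiftn0. ring.
  - simpl powN. rewrite IHk. rewrite conv_scal_r, conv_scal_l, conv_shiftn_r, conv_shift1.
    rewrite shiftn_add. replace (k + 1)%nat with (S k) by lia. simpl. ring.
Qed.


Lemma asy_const1 : asy (fun _ => 1) delta.
Proof.
  intros N. eapply bigO_ext; [|apply bigO_zero]. exists 1; split; [lra|]. intros z _.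
  assert (poly delta N z = 1). { induction N; unfold poly in *; simpl; [ring|]. rewrite IHN; ring. }
  rewrite H; ring.
Qed.

Lemma asy_pow f b : asy f b -> forall k, asy (fun z => f z ^ k) (powN b k).
Proof.
  intros Hf k; induction k.
  - eapply asy_ext_all; [|apply asy_const1]. intros; simpl; auto.
  - eapply asy_ext_all; [|apply (asy_mult _ _ _ _ Hf IHk)]. intros; simpl; auto.
Qed.

Lemma asy_div f g d e m : asy (fun z => f z * g z) (conv d e) -> asy g e -> 0 < m ->
  near0 (fun z => m <= Rabs (g z)) -> asy f d.
Proof.
  intros H1 Hg Hm Hb N.
  assert (A := asy_agree _ _ _ _ N H1 (asy_mult _ _ _ _ (asy_poly d N) Hg)).
  destruct (bigO_abs _ _ (A ltac:(intros k Hk; apply conv_local; intros; auto; rewrite trunc_eq; auto; lia)))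
    as [C [HC HB]].
  exists (C / m). eapply near0_mono; [apply near0_and; [exact HB|exact Hb]|].
  cbv beta; intros z [B1 B2].
  replace (f z * g z - poly d N z * g z) with ((f z - poly d N z) * g z) in B1 by ring.
  rewrite Rabs_mult in B1.
  assert (0 <= Rabs z ^ S N) by (apply pow_le, Rabs_pos).
  apply (Rmult_le_reg_r m); auto.
  replace (C / m * Rabs z ^ S N * m) with (C * Rabs z ^ S N) by (field; lra).
  eapply Rle_trans; [apply Rmult_le_compat_l; [apply Rabs_pos|exact B2]|exact B1].
Qed.

Lemma asy_powZ f b : 0 < b O -> asy f b -> forall r, asy (fun z => powerRZ (f z) r) (Pf (IZR r) b).
Proof.
  intros Hb Hf.
  assert (Hpos : near0 (fun z => b O / 2 <= f z)).
  { eapply near0_mono; [apply (asy_near f b (b O / 2)); auto; lra|].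
    simpl; intros z Hz. apply Rabs_def2 in Hz. lra. }
  assert (Hnn : forall k, asy (fun z => powerRZ (f z) (Z.of_nat k)) (Pf (INR k) b)).
  { intros k. eapply asy_seq_ext; [|eapply asy_ext_all; [|apply (asy_pow f b Hf k)]].
    - intros n; unfold Pf; apply powN_P; auto.
    - intros; apply pow_powerRZ. }
  assert (Hneg : forall k, asy (fun z => powerRZ (f z) (- Z.of_nat k)) (Pf (- INR k) b)).
  { induction k.
    - eapply asy_seq_ext; [|eapply asy_ext_all; [|apply asy_const1]].
      + intros n; unfold Pf. replace (- INR 0) with 0 by (simpl; ring). rewrite P_zero; auto.
      + intros; simpl; auto.
    - apply (asy_div _ f _ b (b O / 2)); auto; [|lra|].
      + eapply asy_seq_ext; [|eapply asy_ext; [|exact IHk]].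
        * intros n. rewrite <- P_succ by auto. unfold Pf. f_equal. rewrite S_INR; ring.
        * eapply near0_mono; [exact Hpos|]. simpl; intros z Hz.
          replace (- Z.of_nat k)%Z with (- Z.of_nat (S k) + 1)%Z by lia.
          rewrite powerRZ_add by lra. simpl. ring.
      + eapply near0_mono; [exact Hpos|]. simpl; intros z Hz. rewrite Rabs_pos_eq; lra. }
  intros r. destruct (Z_le_gt_dec 0 r).
  - rewrite <- (Z2Nat.id r) by auto. rewrite <- INR_IZR_INZ. apply Hnn.
  - replace r with (- Z.of_nat (Z.to_nat (- r)))%Z by (rewrite Z2Nat.id; lia).
    rewrite opp_IZR, <- INR_IZR_INZ. apply Hneg.
Qed.

Lemma asy_neg f c : asy f c -> asy (fun z => f (- z)) (fun k => (-1) ^ k * c k).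
Proof.
  intros Hf N. destruct (Hf N) as [C [d [Hd H]]]. exists C, d; split; auto.
  intros z Hz. rewrite <- (Rabs_Ropp z). replace (poly (fun k => (-1) ^ k * c k) N z) with (poly c N (- z)).
  - apply H. rewrite Rabs_Ropp; auto.
  - apply sum_ext; intros. replace (- z) with (-1 * z) by ring. rewrite Rpow_mult_distr. ring.
Qed.

Lemma pRZ x n : x <> 0 -> powerRZ x (1 - 2 * Z.of_nat n) = x * / x ^ (2 * n).
Proof.
  intros Hx. replace (1 - 2 * Z.of_nat n)%Z with (1 + - Z.of_nat (2 * n))%Z by lia.
  rewrite powerRZ_add, powerRZ_neg', <- pow_powerRZ by auto. simpl; ring.
Qed.

Lemma sum_rescale (a : nat -> R) t x N : 0 < x ->
  sum_f_R0 (fun n => a n * t ^ (2 * n) * powerRZ x (1 - 2 * Z.of_nat n)) N =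
  x * sum_f_R0 (fun n => a n * (t / x) ^ (2 * n)) N.
Proof.
  intros Hx. rewrite <- sum_scal_l. apply sum_ext; intros n _.
  rewrite pRZ by lra. unfold Rdiv. rewrite Rpow_mult_distr, pow_inv.
  field. apply pow_nonzero; lra.
Qed.

Lemma poly_spread a N z : poly (spread a) (2 * N + 1) z = sum_f_R0 (fun n => a n * z ^ (2 * n)) N.
Proof.
  unfold poly. rewrite sum_even_part1 by (intros; rewrite spread_odd; ring).
  apply sum_ext; intros; rewrite spread_even; auto.
Qed.

Lemma mean_a0 Q a : is_mean Q -> has_sym_asymp Q a -> a O = 1.
Proof.
  intros Hm Ha. destruct (Req_dec (a O) 1) as [E|E]; auto. exfalso.
  set (e := Rabs (1 - a O) / 2). assert (He : 0 < e) by (unfold e; apply Rdiv_lt_0_compat; [apply Rabs_pos_lt; lra|lra]).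
  destruct (Ha 0 0%nat e He) as [X HX].
  set (x := Rmax X 1 + 1). assert (Hx1 : 1 < x) by (unfold x; pose proof (Rmax_r X 1); lra).
  assert (HxX : X < x) by (unfold x; pose proof (Rmax_l X 1); lra).
  specialize (HX x HxX). rewrite Rminus_0_r, Rplus_0_r in HX.
  destruct (Hm x x ltac:(lra) ltac:(lra)) as [_ [H1 H2]].
  rewrite Rmin_left in H1 by lra. rewrite Rmax_left in H2 by lra.
  assert (Q x x = x) by lra. rewrite H in HX. simpl in HX.
  replace (x - a O * 1 * (x * 1)) with (x * (1 - a O)) in HX by ring.
  rewrite Rmult_1_r, Rabs_mult, Rabs_pos_eq in HX by lra.
  fold e in HX. unfold e in HX. pose proof (Rabs_pos_lt (1 - a O) ltac:(lra)). nra.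
Qed.

Lemma kappa_asy Q a : is_mean Q -> is_homogeneous Q -> has_sym_asymp Q a ->
  asy (fun w => Q (1 - w) (1 + w)) (spread a).
Proof.
  intros Hm Hh Ha. assert (Ha0 := mean_a0 Q a Hm Ha).
  apply asy_weak; intros N. exists (2 * (S N) + 1)%nat; split; [lia|].
  apply (bigO_weak _ (2 * S N)); [|lia].
  destruct (Ha 1 (S N) 1 ltac:(lra)) as [X1 H1].
  destruct (Ha (-1) (S N) 1 ltac:(lra)) as [X2 H2].
  assert (Hg : forall t x, (t = 1 \/ t = -1) -> Rabs X1 + Rabs X2 < x ->
    Rabs (Q (x - t) (x + t) - sum_f_R0 (fun n => a n * t ^ (2 * n) * powerRZ x (1 - 2 * Z.of_nat n)) (S N))
    <= 1 * Rabs (powerRZ x (1 - 2 * Z.of_nat (S N)))).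
  { intros t x [-> | ->] Hx; [apply H1|apply H2];
    pose proof (Rle_abs X1); pose proof (Rle_abs X2); pose proof (Rabs_pos X1); pose proof (Rabs_pos X2); lra. }
  exists 1. exists (/ (Rabs X1 + Rabs X2 + 2)).
  split; [apply Rinv_0_lt_compat; pose proof (Rabs_pos X1); pose proof (Rabs_pos X2); lra|].
  intros w Hw. rewrite poly_spread.
  assert (HD : 0 < Rabs X1 + Rabs X2 + 2) by (pose proof (Rabs_pos X1); pose proof (Rabs_pos X2); lra).
  destruct (Req_dec w 0) as [->|Hw0].
  - rewrite Rminus_0_r, Rplus_0_r.
    destruct (Hm 1 1 ltac:(lra) ltac:(lra)) as [_ [A B]].
    rewrite Rmin_left in A by lra. rewrite Rmax_left in B by lra.
    replace (Q 1 1) with 1 by lra.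
    assert (sum_f_R0 (fun n => a n * 0 ^ (2 * n)) (S N) = 1).
    { clear -Ha0. induction N; simpl; [rewrite Ha0; ring|]. simpl in IHN. rewrite IHN. ring. }
    rewrite H, Rminus_diag, Rabs_R0. rewrite pow_i by lia. lra.
  - set (x := / Rabs w). assert (Hwp : 0 < Rabs w) by (apply Rabs_pos_lt; auto).
    assert (Hx : 0 < x) by (unfold x; apply Rinv_0_lt_compat; auto).
    assert (HwD : Rabs w * (Rabs X1 + Rabs X2 + 2) < 1).
    { apply (Rmult_lt_compat_r (Rabs X1 + Rabs X2 + 2)) in Hw; auto.
      rewrite Rinv_l in Hw; lra. }
    assert (Hxb : Rabs X1 + Rabs X2 + 1 < x).
    { unfold x. apply (Rmult_lt_reg_l (Rabs w)); auto. rewrite Rinv_r by lra. nra. }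
    assert (Hw1 : Rabs w < 1) by (pose proof (Rabs_pos X1); pose proof (Rabs_pos X2); nra).
    set (t := w * x).
    assert (Ht : t = 1 \/ t = -1).
    { unfold t, x. destruct (Rle_or_lt 0 w).
      - left. rewrite Rabs_pos_eq by lra. field; auto.
      - right. rewrite Rabs_left by lra. field; lra. }
    specialize (Hg t x Ht ltac:(lra)).
    rewrite sum_rescale in Hg by auto.
    replace (t / x) with w in Hg by (unfold t; field; lra).
    replace (x - t) with (x * (1 - w)) in Hg by (unfold t; ring).
    replace (x + t) with (x * (1 + w)) in Hg by (unfold t; ring).
    assert (Hwb : -1 < w < 1) by (apply Rabs_def2 in Hw1; lra).
    rewrite Hh in Hg by lra.
    rewrite <- Rmult_minus_distr_l, Rabs_mult, (Rabs_pos_eq x) in Hg by lra.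
    rewrite pRZ in Hg by lra. rewrite Rabs_mult, (Rabs_pos_eq x) in Hg by lra. rewrite (Rabs_pos_eq (/ _)) in Hg.
    2: left; apply Rinv_0_lt_compat, pow_lt; auto.
    rewrite Rmult_1_l in Hg. apply (Rmult_le_reg_l x); auto.
    idtac. replace (Rabs w) with (/ x) by (unfold x; rewrite Rinv_inv; auto).
    rewrite pow_inv. lra.
Qed.


Definition gam (a al be : nat -> R) (j : nat) : R :=
  sum_f_R0 (fun n => a n * conv (powN be (2 * n)) (Pf (IZR (1 - 2 * Z.of_nat n)) al) j) j.

Lemma asy_sumN (f : nat -> R -> R) (c : nat -> nat -> R) N :
  (forall n, asy (f n) (c n)) ->
  asy (fun z => sum_f_R0 (fun n => f n z) N) (fun j => sum_f_R0 (fun n => c n j) N).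
Proof.
  intros H; induction N; simpl; auto. apply asy_plus; auto.
Qed.

Lemma sum_stable F L A : (forall n, (L < n)%nat -> F n = 0) -> (L <= A)%nat ->
  sum_f_R0 F A = sum_f_R0 F L.
Proof.
  intros H HA; induction A.
  - assert (L = 0%nat) by lia; subst; auto.
  - destruct (Nat.eq_dec L (S A)) as [->|]; auto. simpl. rewrite IHA by lia. rewrite H by lia. ring.
Qed.

Lemma powN_low be : be O = 0 -> forall k X j, (j < k)%nat -> conv (powN be k) X j = 0.
Proof.
  intros H0 k X j Hj.
  assert (E : be = fun i => 1 * shiftn 1 (fun i => be (S i)) i).
  { extensionality i. destruct i; [rewrite shiftn_low by lia; lra|].
    rewrite shiftn_high by lia. replace (S (S i - 1)) with (S i) by lia. ring. }
  rewrite E, powN_shift.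
  rewrite conv_scal_l, conv_shiftn_l, shiftn_low by auto. ring.
Qed.

Lemma gam_trunc a al be N j : be O = 0 -> (j <= 2 * N + 1)%nat ->
  gam a al be j = sum_f_R0 (fun n => a n * conv (powN be (2 * n)) (Pf (IZR (1 - 2 * Z.of_nat n)) al) j) N.
Proof.
  intros H0 Hj. unfold gam. destruct (parity j) as [m Hm].
  assert (Hz : forall n, (m < n)%nat -> a n * conv (powN be (2 * n)) (Pf (IZR (1 - 2 * Z.of_nat n)) al) j = 0).
  { intros n Hn. rewrite powN_low by (auto; lia). ring. }
  rewrite (sum_stable _ m j), (sum_stable _ m N); auto; lia.
Qed.

Lemma mean_lemma Q a U V al be :
  is_mean Q -> is_homogeneous Q -> has_sym_asymp Q a ->
  asy U al -> asy V be -> 0 < al O -> be O = 0 ->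
  asy (fun z => Q (U z - V z) (U z + V z)) (gam a al be).
Proof.
  intros Hm Hh Ha HU HV Hal Hbe.
  assert (Hk := kappa_asy Q a Hm Hh Ha).
  apply asy_weak; intros N. exists (2 * N + 1)%nat; split; [lia|].
  set (T := fun z => sum_f_R0 (fun n => a n * (V z ^ (2 * n) * powerRZ (U z) (1 - 2 * Z.of_nat n))) N).
  assert (HT : asy T (fun j => sum_f_R0 (fun n => a n * conv (powN be (2 * n)) (Pf (IZR (1 - 2 * Z.of_nat n)) al) j) N)).
  { apply (asy_sumN (fun n z => a n * (V z ^ (2 * n) * powerRZ (U z) (1 - 2 * Z.of_nat n)))
      (fun n j => a n * conv (powN be (2 * n)) (Pf (IZR (1 - 2 * Z.of_nat n)) al) j)).
    intros n. apply asy_scal. apply asy_mult; [apply asy_pow; auto|apply asy_powZ; auto]. }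
  assert (Hpe : forall z, poly (gam a al be) (2 * N + 1) z =
     poly (fun j => sum_f_R0 (fun n => a n * conv (powN be (2 * n)) (Pf (IZR (1 - 2 * Z.of_nat n)) al) j) N) (2 * N + 1) z).
  { intros z; apply poly_ext; intros k Hk'; apply gam_trunc; auto. }
  assert (HPhi : bigO (fun z => Q (U z - V z) (U z + V z) - T z) (2 * N + 2)).
  { destruct (asy_bounded _ _ HU) as [BU HBU].
    destruct (bigO_abs _ _ (HV 0%nat)) as [CV [HCV HVb]].
    destruct (bigO_abs _ _ (Hk (2 * N + 1)%nat)) as [Ck [HCk [dk [Hdk Hkb]]]].
    assert (HUp := asy_near U al (al O / 2) HU ltac:(lra)).
    set (e := Rmin 1 dk * (al O / (2 * (CV + 1)))).
    assert (He : 0 < e) by (unfold e; apply Rmult_lt_0_compat; [apply Rmin_pos; lra|apply Rdiv_lt_0_compat; lra]).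
    exists (Rabs BU * Ck * (2 * CV / al O) ^ (2 * N + 2)).
    eapply near0_mono; [apply near0_and; [exact HBU|apply near0_and; [exact HVb|apply near0_and; [exact HUp|apply (near0_lt e He)]]]|].
    cbv beta. intros z [B1 [B2 [B3 B4]]].
    unfold poly in B2; simpl in B2. rewrite Hbe, Rmult_0_l, Rminus_0_r, Rmult_1_r in B2.
    apply Rabs_def2 in B3. assert (HUz : al O / 2 < U z) by lra.
    set (w := V z / U z).
    assert (Hw : Rabs w <= 2 * CV / al O * Rabs z).
    { unfold w. unfold Rdiv. rewrite Rabs_mult, Rabs_inv, (Rabs_pos_eq (U z)) by lra.
      apply (Rmult_le_reg_r (U z)); [lra|]. rewrite Rmult_assoc, Rinv_l by lra.
      assert (0 <= 2 * CV / al O * Rabs z) by (apply Rmult_le_pos; [unfold Rdiv; apply Rmult_le_pos; [lra|left; apply Rinv_0_lt_compat; lra]|apply Rabs_pos]).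
      assert (2 * CV / al O * Rabs z * (al O / 2) <= 2 * CV / al O * Rabs z * U z) by (apply Rmult_le_compat_l; lra).
      replace (2 * CV / al O * Rabs z * (al O / 2)) with (CV * Rabs z) in H0 by (field; lra). lra. }
    assert (Hwl : Rabs w < Rmin 1 dk).
    { eapply Rle_lt_trans; [exact Hw|].
      assert (Rabs z * (2 * (CV + 1)) < Rmin 1 dk * al O).
      { apply (Rmult_lt_compat_r (2 * (CV + 1))) in B4; [|lra]. unfold e in B4.
        replace (Rmin 1 dk * (al O / (2 * (CV + 1))) * (2 * (CV + 1))) with (Rmin 1 dk * al O) in B4
          by (field; lra). exact B4. }
      apply (Rmult_lt_reg_r (al O)); auto.
      replace (2 * CV / al O * Rabs z * al O) with (2 * CV * Rabs z) by (field; lra).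
      pose proof (Rabs_pos z). nra. }
    assert (Hw1 : -1 < w < 1) by (assert (Rabs w < 1) by (eapply Rlt_le_trans; [exact Hwl|apply Rmin_l]); apply Rabs_def2 in H; lra).
    assert (Hwd : Rabs w < dk) by (eapply Rlt_le_trans; [exact Hwl|apply Rmin_r]).
    specialize (Hkb w Hwd). cbv beta in Hkb. rewrite poly_spread in Hkb.
    replace (U z - V z) with (U z * (1 - w)) by (unfold w; field; lra).
    replace (U z + V z) with (U z * (1 + w)) by (unfold w; field; lra).
    rewrite Hh by lra.
    replace (T z) with (U z * sum_f_R0 (fun n => a n * w ^ (2 * n)) N).
    2:{ unfold T. rewrite <- sum_scal_l. apply sum_ext; intros n _. rewrite pRZ by lra.
        unfold w, Rdiv. rewrite Rpow_mult_distr, pow_inv. field. apply pow_nonzero; lra. }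
    rewrite <- Rmult_minus_distr_l, Rabs_mult.
    replace (Rabs BU * Ck * (2 * CV / al O) ^ (2 * N + 2) * Rabs z ^ (2 * N + 2))
      with (Rabs BU * (Ck * (2 * CV / al O * Rabs z) ^ (2 * N + 2))) by (rewrite Rpow_mult_distr; ring).
    apply Rmult_le_compat; try apply Rabs_pos.
    - eapply Rle_trans; [exact B1|apply RRle_abs].
    - eapply Rle_trans; [exact Hkb|]. replace (S (2 * N + 1)) with (2 * N + 2)%nat by lia.
      apply Rmult_le_compat_l; auto. apply pow_incr. split; [apply Rabs_pos|auto]. }
  eapply bigO_ext; [|apply bigO_plus; [apply (bigO_weak _ _ (S N) HPhi); lia|
     apply (bigO_weak _ _ (S N) (HT (2 * N + 1)%nat)); lia]].
  exists 1; split; [lra|]; intros z _. rewrite Hpe. ring.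
Qed.


Lemma Rpower_one r : Rpower 1 r = 1.
Proof. unfold Rpower. rewrite ln_1, Rmult_0_r, exp_0. auto. Qed.

Lemma P0_val r b : P 0 r b = Rpower (b O) r.
Proof. reflexivity. Qed.

Lemma P1_val r b : P 1 r b = / b O * (r * b 1%nat * Rpower (b O) r).
Proof.
  rewrite P_rec. simpl sum_f_R0. rewrite P0_val. simpl INR. rewrite Rmult_1_l. f_equal. ring.
Qed.

Lemma r_even n : INR (2 * n) = 2 * INR n.
Proof. rewrite mult_INR. simpl. ring. Qed.

Lemma r_odd n : IZR (1 - 2 * Z.of_nat n) = -2 * INR n + 1.
Proof. rewrite minus_IZR, mult_IZR, <- INR_IZR_INZ. simpl. ring. Qed.

Definition c1m (k : nat) : R := match k with O => 1 | 1%nat => -1 | _ => 0 end.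

Lemma hseq_eq aM k : aM O = 1 -> / 2 * (c1m k + spread aM k) = / 2 * hseq aM k.
Proof.
  intros H. destruct k as [|[|k]].
  - unfold spread; simpl. rewrite H; ring.
  - unfold spread; simpl. ring.
  - unfold spread, c1m, hseq. ring.
Qed.

Lemma gseq_eq aM k : aM O = 1 -> / 2 * (spread aM k - c1m k) = / 2 * shiftn 1 (gseq aM) k.
Proof.
  intros H. destruct k as [|[|k]].
  - unfold spread, shiftn; simpl. rewrite H; ring.
  - unfold spread, shiftn; simpl. ring.
  - rewrite shiftn_high by lia. replace (S (S k) - 1)%nat with (S k) by lia.
    unfold spread, c1m, gseq. rewrite Nat.odd_succ. simpl Nat.even. ring.
Qed.

Lemma gam1_eq aM aN j :
  gam aN (fun k => / 2 * hseq aM k) (fun k => / 2 * shiftn 1 (gseq aM) k) j =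
  sum_f_R0 (fun n => aN n * (/ 2 * shiftn (2 * n)
     (conv (Pf (2 * INR n) (gseq aM)) (Pf (-2 * INR n + 1) (hseq aM))) j)) j.
Proof.
  unfold gam. apply sum_ext; intros n _. f_equal.
  rewrite powN_shift.
  replace (Pf (IZR (1 - 2 * Z.of_nat n)) (fun k => / 2 * hseq aM k))
    with (fun k => Rpower (/ 2) (-2 * INR n + 1) * Pf (-2 * INR n + 1) (hseq aM) k).
  2:{ extensionality k. unfold Pf. rewrite r_odd. rewrite P_scal; auto; [lra|]. simpl; lra. }
  rewrite conv_scal_l, conv_scal_r, conv_shiftn_l.
  replace (powN (gseq aM) (2 * n)) with (Pf (2 * INR n) (gseq aM)).
  2:{ extensionality k. unfold Pf. rewrite powN_P by (simpl; lra). rewrite r_even; auto. }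
  replace ((/ 2) ^ (2 * n)) with (Rpower (/ 2) (2 * INR n)) by (rewrite <- r_even, Rpower_pow; auto; lra).
  rewrite <- Rmult_assoc, <- Rpower_plus.
  replace (2 * INR n + (-2 * INR n + 1)) with 1 by ring. rewrite Rpower_1 by lra. auto.
Qed.

Lemma gam1_even aM aN m :
  gam aN (fun k => / 2 * hseq aM k) (fun k => / 2 * shiftn 1 (gseq aM) k) (2 * m) = sseq aM aN m.
Proof.
  rewrite gam1_eq. unfold sseq.
  rewrite (sum_stable _ m (2 * m)).
  2:{ intros n Hn. rewrite shiftn_low by lia. ring. }
  2: lia.
  rewrite <- sum_scal_l. apply sum_ext; intros n Hn.
  rewrite shiftn_high by lia. unfold conv, Pf. ring.
Qed.

Lemma gam1_odd aM aN m :
  gam aN (fun k => / 2 * hseq aM k) (fun k => / 2 * shiftn 1 (gseq aM) k) (2 * m + 1) = - dseq aM aN m.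
Proof.
  rewrite gam1_eq. unfold dseq.
  rewrite (sum_stable _ m (2 * m + 1)).
  2:{ intros n Hn. rewrite shiftn_low by lia. ring. }
  2: lia.
  replace (- (- / 2 * sum_f_R0 (fun n => aN n * sum_f_R0 (fun k => P k (2 * INR n) (gseq aM)
     * P (2 * m + 1 - 2 * n - k) (-2 * INR n + 1) (hseq aM)) (2 * m + 1 - 2 * n)) m))
    with (/ 2 * sum_f_R0 (fun n => aN n * sum_f_R0 (fun k => P k (2 * INR n) (gseq aM)
     * P (2 * m + 1 - 2 * n - k) (-2 * INR n + 1) (hseq aM)) (2 * m + 1 - 2 * n)) m) by ring.
  rewrite <- sum_scal_l. apply sum_ext; intros n Hn.
  rewrite shiftn_high by lia. unfold conv, Pf. ring.
Qed.

Lemma s0_val aM aN : aN O = 1 -> sseq aM aN 0 = 1.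
Proof.
  intros H. unfold sseq. simpl sum_f_R0. rewrite H, !P0_val.
  replace (-2 * 0 + 1) with 1 by ring.
  simpl gseq; simpl hseq. rewrite Rpower_one, Rpower_1 by lra. field.
Qed.

Lemma d0_val aM aN : aN O = 1 -> dseq aM aN 0 = / 2.
Proof.
  intros H. unfold dseq. simpl sum_f_R0. rewrite H, !P0_val, !P1_val.
  replace (-2 * 0 + 1) with 1 by ring.
  simpl gseq; simpl hseq. rewrite Rpower_one, Rpower_1 by lra. field.
Qed.

Definition aRseq (aM aN aK : nat -> R) (m : nat) : R :=
  sum_f_R0 (fun n => aK n *
        sum_f_R0 (fun k => P k (2 * INR n) (dseq aM aN)
                         * P (m - n - k) (- 2 * INR n + 1) (sseq aM aN))
                 (m - n)) m.

Lemma gam2_eq aM aN aK j : aN O = 1 ->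
  gam aK (spread (sseq aM aN)) (fun k => 1 * shiftn 1 (spread (dseq aM aN)) k) j =
  spread (aRseq aM aN aK) j.
Proof.
  intros HN. assert (Hs := s0_val aM aN HN). assert (Hd := d0_val aM aN HN).
  unfold gam.
  rewrite (sum_ext _ (fun n => aK n * shiftn (2 * n) (spread (conv (Pf (2 * INR n) (dseq aM aN))
     (Pf (-2 * INR n + 1) (sseq aM aN)))) j)).
  2:{ intros n _. f_equal. rewrite powN_shift, powN_spread.
      replace (Pf (IZR (1 - 2 * Z.of_nat n)) (spread (sseq aM aN)))
        with (spread (Pf (-2 * INR n + 1) (sseq aM aN))).
      2:{ extensionality k. unfold Pf. rewrite P_spread by lra. rewrite r_odd; reflexivity. }
      rewrite conv_scal_l, conv_shiftn_l, pow1, Rmult_1_l.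
      replace (powN (dseq aM aN) (2 * n)) with (Pf (2 * INR n) (dseq aM aN)).
      2:{ extensionality k. unfold Pf. rewrite powN_P by lra. rewrite r_even; auto. }
      f_equal. extensionality k. apply conv_spread. }
  destruct (parity j) as [m [->| ->]].
  - rewrite spread_even. rewrite (sum_stable _ m (2 * m)).
    2:{ intros n Hn. rewrite shiftn_low by lia. ring. }
    2: lia.
    unfold aRseq. apply sum_ext; intros n Hn. rewrite shiftn_high by lia.
    replace (2 * m - 2 * n)%nat with (2 * (m - n))%nat by lia. rewrite spread_even. auto.
  - rewrite spread_odd. apply sum_eq_R0; intros n _.
    destruct (le_lt_dec n m).
    + rewrite shiftn_high by lia. replace (2 * m + 1 - 2 * n)%nat with (2 * (m - n) + 1)%nat by lia.
      rewrite spread_odd; ring.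
    + rewrite shiftn_low by lia; ring.
Qed.


Lemma sym_of_asy (F : R -> R -> R) (rho : R -> R) (a : nat -> R) :
  (forall x t, 0 < x -> Rabs t < x -> F (x - t) (x + t) = x * rho (t / x)) ->
  asy rho (spread a) -> has_sym_asymp F a.
Proof.
  intros HF Hr t N0 eps He.
  destruct (bigO_abs _ _ (Hr (2 * N0 + 1)%nat)) as [C [HC [d [Hd Hb]]]].
  set (K := C * Rabs t ^ (2 * N0 + 2)).
  assert (HK0 : 0 <= K) by (unfold K; apply Rmult_le_pos; auto; apply pow_le, Rabs_pos).
  exists ((Rabs t + 1) / d + Rabs t + 1 + K / eps). intros x Hx.
  assert (H1 : 0 <= (Rabs t + 1) / d) by (apply Rmult_le_pos; [pose proof (Rabs_pos t); lra|left; apply Rinv_0_lt_compat; lra]).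
  assert (H2 : 0 <= K / eps) by (apply Rmult_le_pos; [lra|left; apply Rinv_0_lt_compat; lra]).
  pose proof (Rabs_pos t).
  assert (Hx1 : 1 < x) by lra. assert (Htx : Rabs t < x) by lra.
  assert (Hxd : Rabs t + 1 < d * x).
  { assert (H3 : (Rabs t + 1) / d < x) by lra. apply (Rmult_lt_compat_l d) in H3; auto.
    replace (d * ((Rabs t + 1) / d)) with (Rabs t + 1) in H3 by (field; lra). lra. }
  assert (HKx : K < eps * x).
  { assert (H3 : K / eps < x) by lra. apply (Rmult_lt_compat_l eps) in H3; auto.
    replace (eps * (K / eps)) with K in H3 by (field; lra). lra. }
  rewrite HF by lra. rewrite sum_rescale by lra.
  set (w := t / x).
  assert (Hw : Rabs w = Rabs t * / x).
  { unfold w, Rdiv. rewrite Rabs_mult, Rabs_inv, (Rabs_pos_eq x) by lra. auto. }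
  assert (Hwd : Rabs w < d).
  { rewrite Hw. apply (Rmult_lt_reg_r x); [lra|]. rewrite Rmult_assoc, Rinv_l by lra. lra. }
  specialize (Hb w Hwd). cbv beta in Hb. rewrite poly_spread in Hb.
  rewrite <- Rmult_minus_distr_l, Rabs_mult, (Rabs_pos_eq x) by lra.
  rewrite pRZ by lra. rewrite Rabs_mult, (Rabs_pos_eq x), (Rabs_pos_eq (/ _)) by
    (try lra; left; apply Rinv_0_lt_compat, pow_lt; lra).
  replace (S (2 * N0 + 1)) with (2 * N0 + 2)%nat in Hb by lia.
  rewrite Hw, Rpow_mult_distr in Hb.
  assert (E : C * (Rabs t ^ (2 * N0 + 2) * (/ x) ^ (2 * N0 + 2)) = K * / x * / x * / x ^ (2 * N0)).
  { unfold K. rewrite pow_inv. replace (2 * N0 + 2)%nat with (2 * N0 + 1 + 1)%nat by lia.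
    rewrite !pow_add. simpl. assert (x ^ (N0 + (N0 + 0)) <> 0) by (apply pow_nonzero; lra). field. split; lra. }
  rewrite E in Hb.
  assert (Hq : K * / x * / x <= eps).
  { apply (Rmult_le_reg_r (x * x)); [nra|].
    replace (K * / x * / x * (x * x)) with K by (field; lra). nra. }
  assert (0 < / x ^ (2 * N0)) by (apply Rinv_0_lt_compat, pow_lt; lra).
  apply Rmult_le_compat_l with (r := x) in Hb; [|lra].
  eapply Rle_trans; [exact Hb|].
  replace (eps * (x * / x ^ (2 * N0))) with (x * (eps * / x ^ (2 * N0))) by ring.
  apply Rmult_le_compat_l; [lra|]. apply Rmult_le_compat_r; lra.
Qed.

Lemma resultant_homog K N M : is_mean M -> is_homogeneous M -> is_mean N -> is_homogeneous N ->
  is_homogeneous K ->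
  forall x t, 0 < x -> Rabs t < x ->
  resultant K N M (x - t) (x + t) = x * resultant K N M (1 - t / x) (1 + t / x).
Proof.
  intros HmM HhM HmN HhN HhK x t Hx Ht.
  assert (Hw : Rabs (t / x) < 1).
  { unfold Rdiv. rewrite Rabs_mult, Rabs_inv, (Rabs_pos_eq x) by lra.
    apply (Rmult_lt_reg_r x); [lra|]. rewrite Rmult_assoc, Rinv_l by lra. lra. }
  apply Rabs_def2 in Hw.
  set (w := t / x) in *.
  replace (x - t) with (x * (1 - w)) by (unfold w; field; lra).
  replace (x + t) with (x * (1 + w)) by (unfold w; field; lra).
  unfold resultant. rewrite HhM by lra.
  destruct (HmM (1 - w) (1 + w)) as [Hm0 _]; try lra.
  rewrite !HhN by lra.
  destruct (HmN (1 - w) (M (1 - w) (1 + w))) as [Hn1 _]; try lra.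
  destruct (HmN (M (1 - w) (1 + w)) (1 + w)) as [Hn2 _]; try lra.
  rewrite HhK by lra. auto.
Qed.

Theorem theorem3p1 (M N K : R -> R -> R) (aM aN aK : nat -> R) :
  is_mean M -> is_symmetric M -> is_homogeneous M -> has_sym_asymp M aM ->
  is_mean N -> is_symmetric N -> is_homogeneous N -> has_sym_asymp N aN ->
  is_mean K -> is_symmetric K -> is_homogeneous K -> has_sym_asymp K aK ->
  has_sym_asymp (resultant K N M)
    (fun m => sum_f_R0 (fun n => aK n *
        sum_f_R0 (fun k => P k (2 * INR n) (dseq aM aN)
                         * P (m - n - k) (- 2 * INR n + 1) (sseq aM aN))
                 (m - n)) m).
Proof.
  intros HmM HsM HhM HaM HmN HsN HhN HaN HmK HsK HhK HaK.
  assert (aM0 := mean_a0 M aM HmM HaM). assert (aN0 := mean_a0 N aN HmN HaN).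
  set (mu := fun z => M (1 - z) (1 + z)).
  assert (Hmu : asy mu (spread aM)) by (apply kappa_asy; auto).
  assert (Hc1 : asy (fun z => 1 - z) c1m).
  { eapply asy_seq_ext; [|eapply asy_ext_all; [|apply (asy_poly c1m 1)]].
    - intros [|[|k]]; reflexivity.
    - intros z; unfold poly; simpl; ring. }
  assert (HU1 : asy (fun z => / 2 * ((1 - z) + mu z)) (fun k => / 2 * hseq aM k)).
  { eapply asy_seq_ext; [|exact (asy_scal _ _ (/2) (asy_plus _ _ _ _ Hc1 Hmu))]. intros k; apply hseq_eq; auto. }
  assert (HV1 : asy (fun z => / 2 * (mu z - (1 - z))) (fun k => / 2 * shiftn 1 (gseq aM) k)).
  { eapply asy_seq_ext; [|exact (asy_scal _ _ (/2) (asy_minus _ _ _ _ Hmu Hc1))]. intros k; apply gseq_eq; auto. }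
  set (g1 := gam aN (fun k => / 2 * hseq aM k) (fun k => / 2 * shiftn 1 (gseq aM) k)).
  assert (HA : asy (fun z => N (1 - z) (mu z)) g1).
  { eapply asy_ext_all; [|apply (mean_lemma N aN _ _ _ _ HmN HhN HaN HU1 HV1)].
    - intros z. cbv beta. f_equal; field.
    - simpl; lra.
    - unfold shiftn; simpl; ring. }
  assert (HB : asy (fun z => N (mu z) (1 + z)) (fun k => (-1) ^ k * g1 k)).
  { eapply asy_ext; [|apply (asy_neg _ _ HA)].
    exists 1; split; [lra|]. intros z Hz. apply Rabs_def2 in Hz. unfold mu.
    replace (1 - - z) with (1 + z) by ring. replace (1 + - z) with (1 - z) by ring.
    rewrite HsM by lra. destruct (HmM (1 - z) (1 + z)) as [Hp _]; try lra.
    apply HsN; lra. }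
  set (s := sseq aM aN). set (d := dseq aM aN).
  assert (HU2 : asy (fun z => / 2 * (N (1 - z) (mu z) + N (mu z) (1 + z))) (spread s)).
  { eapply asy_seq_ext; [|exact (asy_scal _ _ (/2) (asy_plus _ _ _ _ HA HB))].
    intros k. destruct (parity k) as [m [->| ->]].
    - rewrite pow_1_even, spread_even. unfold g1. rewrite gam1_even. unfold s; field.
    - replace (2 * m + 1)%nat with (S (2 * m)) by lia. rewrite pow_1_odd.
      replace (S (2 * m)) with (2 * m + 1)%nat by lia. rewrite spread_odd. ring. }
  assert (HV2 : asy (fun z => / 2 * (N (mu z) (1 + z) - N (1 - z) (mu z)))
                    (fun k => 1 * shiftn 1 (spread d) k)).
  { eapply asy_seq_ext; [|exact (asy_scal _ _ (/2) (asy_minus _ _ _ _ HB HA))].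
    intros k. destruct (parity k) as [m [->| ->]].
    - rewrite pow_1_even. destruct m.
      + rewrite shiftn_low by lia. ring.
      + rewrite shiftn_high by lia. replace (2 * S m - 1)%nat with (2 * m + 1)%nat by lia.
        rewrite spread_odd. ring.
    - replace (2 * m + 1)%nat with (S (2 * m)) by lia. rewrite pow_1_odd.
      replace (S (2 * m)) with (2 * m + 1)%nat by lia.
      rewrite shiftn_high by lia. replace (2 * m + 1 - 1)%nat with (2 * m)%nat by lia.
      rewrite spread_even. unfold g1. rewrite gam1_odd. unfold d. field. }
  assert (Hrho : asy (fun z => resultant K N M (1 - z) (1 + z)) (spread (aRseq aM aN aK))).
  { eapply asy_seq_ext; [intros k; apply gam2_eq; auto|].
    eapply asy_ext_all; [|apply (mean_lemma K aK _ _ _ _ HmK HhK HaK HU2 HV2)].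
    - intros z. cbv beta. unfold resultant. fold (mu z). f_equal; field.
    - unfold spread; simpl. unfold s; rewrite s0_val; auto; lra.
    - unfold shiftn; simpl; ring. }
  apply (sym_of_asy _ _ _ (resultant_homog K N M HmM HhM HmN HhN HhK) Hrho).
Qed.
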